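(* Suppose $\mathrm{char}(k)\ne2$ ($k$ algebraically closed). The set $\mathscr{X}_2$ of isogeny classes of non-degenerate quadratic spaces of countable dimension has exactly one element.
   Context: A quadratic space is a $k$-vector space $V$ together with $q\in P_2(V)$, a degree-$2$ polynomial function on $V$ (in dual coordinates to a basis, a formal, possibly infinite, $k$-linear combination of degree-$2$ monomials). The strength of $q$ is the least $s$ with $q=\sum_{i=1}^s g_ih_i$ for linear forms $g_i,h_i$ ($\infty$ if none exists); $(V,q)$ is non-degenerate if $q$ has infinite strength. An embedding $(W,q')\to(V,q)$ is a $k$-linear map $\phi:W\to V$ with $q\circ\phi=q'$; two quadratic spaces are isogenous if each embeds into the other. *)

(* Defs.v *)
From HB Require Import structures.
From mathcomp Require Import all_boot all_order all_algebra.
Set Implicit Arguments. Unset Strict Implicit. Unset Printing Implicit Defensive.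
Import GRing.Theory.
Local Open Scope ring_scope.

Section QuadSpaces.
Variable k : fieldType.

Definition klinear (U W : lmodType k) (f : U -> W) : Prop :=
  forall (a : k) (u v : U), f (a *: u + v) = a *: f u + f v.

Definition linear_form (V : lmodType k) (f : V -> k) : Prop :=
  forall (a : k) (u v : V), f (a *: u + v) = a * f u + f v.

(* q is a degree-2 (homogeneous) polynomial function on V, i.e. a quadratic
   form: q(a v) = a^2 q(v) and the polar form q(u+v)-q(u)-q(v) is bilinear. *)
Definition polar (V : lmodType k) (q : V -> k) (u v : V) : k :=
  q (u + v) - q u - q v.

Definition is_quadratic (V : lmodType k) (q : V -> k) : Prop :=
  (forall (a : k) (v : V), q (a *: v) = a ^+ 2 * q v) /\
  (forall (a : k) (u w v : V),
      polar q (a *: u + w) v = a * polar q u v + polar q w v).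

Definition spanning (V : lmodType k) (I : Type) (e : I -> V) : Prop :=
  forall v : V, exists (s : seq I) (c : I -> k),
    v = \sum_(i <- s) c i *: e i.

Definition lin_indep (V : lmodType k) (I : eqType) (e : I -> V) : Prop :=
  forall (s : seq I) (c : I -> k), uniq s ->
    \sum_(i <- s) c i *: e i = 0 -> forall i, i \in s -> c i = 0.

Definition countable_dim (V : lmodType k) : Prop :=
  exists (I : countType) (e : I -> V), spanning e /\ lin_indep e.

Definition strength_le (V : lmodType k) (q : V -> k) (s : nat) : Prop :=
  exists (g h : 'I_s -> V -> k),
    (forall i, linear_form (g i)) /\ (forall i, linear_form (h i)) /\
    forall v : V, q v = \sum_(i < s) g i v * h i v.

Definition nondegenerate (V : lmodType k) (q : V -> k) : Prop :=
  forall s : nat, ~ strength_le q s.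

Definition embeds (W V : lmodType k) (q' : W -> k) (q : V -> k) : Prop :=
  exists phi : W -> V, klinear phi /\ forall w : W, q (phi w) = q' w.

Definition isogenous (V W : lmodType k) (q : V -> k) (q' : W -> k) : Prop :=
  embeds q q' /\ embeds q' q.

Definition ndc_quad_space (V : lmodType k) (q : V -> k) : Prop :=
  is_quadratic q /\ countable_dim V /\ nondegenerate q.

End QuadSpaces.

(* Main.v *)
Require Import Defs.
From HB Require Import structures.
From mathcomp Require Import all_boot all_order all_algebra.
From mathcomp Require Import ring lra zify.
From Stdlib Require Import IndefiniteDescription Classical.
Set Implicit Arguments. Unset Strict Implicit. Unset Printing Implicit Defensive.
Import GRing.Theory.
Local Open Scope ring_scope.


Section Polar.
Variable k : fieldType.
Variable V : lmodType k.
Variable q : V -> k.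
Hypothesis Hq : is_quadratic q.

Lemma qzero : q 0 = 0.
Proof. by have := (proj1 Hq) 0 0; rewrite scale0r expr0n /= mul0r. Qed.

Lemma polarC u v : polar q u v = polar q v u.
Proof. rewrite /polar [u + v]addrC; ring. Qed.

Lemma polar_lin a u w v : polar q (a *: u + w) v = a * polar q u v + polar q w v.
Proof. exact: (proj2 Hq). Qed.

Lemma polar0l v : polar q 0 v = 0.
Proof. by rewrite /polar add0r qzero subr0 subrr. Qed.

Lemma polarDl u w v : polar q (u + w) v = polar q u v + polar q w v.
Proof. by rewrite -[u]scale1r polar_lin mul1r scale1r. Qed.

Lemma polarZl a u v : polar q (a *: u) v = a * polar q u v.
Proof. by rewrite -[a *: u]addr0 polar_lin polar0l addr0. Qed.

Lemma polarNl u v : polar q (- u) v = - polar q u v.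
Proof. by rewrite -scaleN1r polarZl mulN1r. Qed.

Lemma polarBl u w v : polar q (u - w) v = polar q u v - polar q w v.
Proof. by rewrite polarDl polarNl. Qed.

Lemma polarDr u w v : polar q v (u + w) = polar q v u + polar q v w.
Proof. by rewrite !(polarC v) polarDl. Qed.

Lemma polarZr a u v : polar q v (a *: u) = a * polar q v u.
Proof. by rewrite !(polarC v) polarZl. Qed.

Lemma polarBr u w v : polar q v (u - w) = polar q v u - polar q v w.
Proof. by rewrite !(polarC v) polarBl. Qed.

Lemma polar0r v : polar q v 0 = 0.
Proof. by rewrite polarC polar0l. Qed.

Lemma qD u v : q (u + v) = q u + q v + polar q u v.
Proof. by rewrite /polar; ring. Qed.

Lemma polarxx x : polar q x x = 2 * q x.
Proof.
rewrite /polar -{1 2}[x]scale1r -scalerDl (proj1 Hq) /=.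
have -> : (1 + 1 : k) = 2 by [].
by rewrite expr2; ring.
Qed.

Lemma polar_suml (I : Type) (s : seq I) (c : I -> k) (x : I -> V) y :
  polar q (\sum_(i <- s) c i *: x i) y = \sum_(i <- s) c i * polar q (x i) y.
Proof.
elim: s => [|a s IH]; first by rewrite !big_nil polar0l.
by rewrite !big_cons polarDl polarZl IH.
Qed.

Lemma polar_sumr (I : Type) (s : seq I) (c : I -> k) (x : I -> V) y :
  polar q y (\sum_(i <- s) c i *: x i) = \sum_(i <- s) c i * polar q y (x i).
Proof.
rewrite polarC polar_suml; apply: eq_bigr => i _; by rewrite polarC.
Qed.

End Polar.



Section Seqs.
Variable k : fieldType.
Variable V : lmodType k.
Variable I : eqType.

Lemma rep_uniq (x : I -> V) (s u : seq I) (c : I -> k) :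
  uniq u -> {subset s <= u} ->
  \sum_(j <- s) c j *: x j = \sum_(i <- u) (\sum_(j <- s | j == i) c j) *: x i.
Proof.
move=> uu su.
under [RHS]eq_bigr => i _ do rewrite scaler_suml big_mkcond /=.
rewrite exchange_big /=; apply: eq_big_seq => j js.
rewrite -big_mkcond /=.
rewrite (eq_bigl (pred1 j)); last by move=> i; rewrite /= eq_sym.
by rewrite -big_filter filter_pred1_uniq // ?big_seq1 //; apply: su.
Qed.

Lemma sum_sub (M : nmodType) (u w : seq I) (F : I -> M) :
  uniq u -> uniq w -> {subset u <= w} ->
  (forall i, i \in w -> i \notin u -> F i = 0) ->
  \sum_(i <- w) F i = \sum_(i <- u) F i.
Proof.
move=> uu uw suw F0.
rewrite (bigID (fun i => i \in u)) /= [X in _ + X]big1_seq ?addr0; last first.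
  by move=> i /andP [iu iw]; apply: F0.
rewrite -big_filter; apply: perm_big; apply: uniq_perm.
- exact: filter_uniq.
- exact: uu.
by move=> i; rewrite mem_filter; apply/andP/idP => [[]//| iu]; split=> //; apply: suw.
Qed.

End Seqs.



Section Embed.
Variable k : fieldType.

Lemma q_sum2 (V : lmodType k) (q : V -> k) (Hq : is_quadratic q) (I : Type)
  (s : seq I) (c : I -> k) (x : I -> V) :
  2 * q (\sum_(i <- s) c i *: x i) =
  \sum_(i <- s) c i * \sum_(j <- s) c j * polar q (x i) (x j).
Proof.
rewrite -polarxx // polar_suml //; apply: eq_bigr => i _; by rewrite polar_sumr.
Qed.

Lemma embed_basis (V W : lmodType k) (q : V -> k) (q' : W -> k) (I : eqType)
  (e : I -> V) (t : I -> W) :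
  (2:k) != 0 -> is_quadratic q -> is_quadratic q' -> spanning e -> lin_indep e ->
  (forall i j, polar q' (t i) (t j) = polar q (e i) (e j)) -> embeds q q'.
Proof.
move=> h2 Hq Hq' Hsp Hli Ht.
have Hex v : exists p : seq I * (I -> k), v = \sum_(i <- p.1) p.2 i *: e i.
  by have [s [c ->]] := Hsp v; exists (s, c).
pose S v := proj1_sig (constructive_indefinite_description _ (Hex v)).
have HS v : v = \sum_(i <- (S v).1) (S v).2 i *: e i :=
  proj2_sig (constructive_indefinite_description _ (Hex v)).
pose coord v i := \sum_(j <- (S v).1 | j == i) (S v).2 j.
have coord0 v i : i \notin (S v).1 -> coord v i = 0.
  move=> ni; rewrite /coord big1_seq // => j /andP [/eqP ji jS].
  by rewrite -ji jS in ni.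
have coordE v u : uniq u -> {subset (S v).1 <= u} -> v = \sum_(i <- u) coord v i *: e i.
  by move=> uu su; rewrite {1}(HS v); apply: rep_uniq.
have uniqE u a b : uniq u -> \sum_(i <- u) a i *: e i = \sum_(i <- u) b i *: e i ->
    forall i, i \in u -> a i = b i.
  move=> uu hab i iu; apply/eqP; rewrite -subr_eq0; apply/eqP.
  apply: (Hli u (fun i => a i - b i) uu _ i iu).
  under eq_bigr => j _ do rewrite scalerBl.
  by rewrite sumrB hab subrr.
pose phi v := \sum_(i <- undup (S v).1) coord v i *: t i.
have phiE v u : uniq u -> {subset (S v).1 <= u} -> phi v = \sum_(i <- u) coord v i *: t i.
  move=> uu su; rewrite /phi; symmetry; apply: sum_sub => //.
  - exact: undup_uniq.
  - by move=> i; rewrite mem_undup; apply: su.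
  - by move=> i _; rewrite mem_undup => /coord0 ->; rewrite scale0r.
exists phi; split.
- move=> a u v.
  set w := a *: u + v.
  pose U := undup ((S u).1 ++ (S v).1 ++ (S w).1).
  have uU : uniq U := undup_uniq _.
  have sub1 : {subset (S u).1 <= U} by move=> x hx; rewrite mem_undup !mem_cat hx.
  have sub2 : {subset (S v).1 <= U} by move=> x hx; rewrite mem_undup !mem_cat hx orbT.
  have sub3 : {subset (S w).1 <= U} by move=> x hx; rewrite mem_undup !mem_cat hx !orbT.
  have Hc : forall i, i \in U -> coord w i = a * coord u i + coord v i.
    apply: uniqE => //.
    rewrite -(coordE w U uU sub3).
    rewrite /w {1}(coordE u U uU sub1) {1}(coordE v U uU sub2) scaler_sumr -big_split /=.
    by apply: eq_bigr => i _; rewrite scalerDl scalerA.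
  rewrite (phiE w U) // (phiE u U) // (phiE v U) // scaler_sumr -big_split /=.
  by apply: eq_big_seq => i iU; rewrite Hc // scalerDl scalerA.
- move=> v.
  set u := undup (S v).1.
  have uu : uniq u := undup_uniq _.
  have su : {subset (S v).1 <= u} by move=> i; rewrite mem_undup.
  rewrite (phiE v u) // {2}(coordE v u uu su).
  apply: (mulfI h2); rewrite !q_sum2 //; apply: eq_bigr => i _; congr (_ * _).
  by apply: eq_bigr => j _; rewrite Ht.
Qed.

End Embed.



Lemma sqrt_ex (k : closedFieldType) (c : k) : exists r : k, r ^+ 2 = c.
Proof.
have : size ('X^2 - c%:P : {poly k}) != 1 by rewrite size_XnsubC.
move/closed_rootP => [r]; rewrite /root !hornerE => /eqP h.
by exists r; apply/eqP; rewrite -subr_eq0 h.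
Qed.

Lemma ortho_ext (k : closedFieldType) (W : lmodType k) (q : W -> k) :
  (2:k) != 0 -> is_quadratic q -> Defs.nondegenerate q ->
  forall n (l : 'I_n -> W), (forall i j, polar q (l i) (l j) = (i == j)%:R * 2) ->
  exists w, (forall j, polar q w (l j) = 0) /\ q w = 1.
Proof.
move=> h2 Hq Hnd n l Hl.
case: (classic (exists w, (forall j, polar q w (l j) = 0) /\ q w = 1)) => // Hno.
exfalso.
have Hz w : (forall j, polar q w (l j) = 0) -> q w = 0.
  move=> hw; case: (eqVneq (q w) 0) => // hc.
  have [r hr] := sqrt_ex (q w)^-1.
  exfalso; apply: Hno; exists (r *: w); split.
    by move=> j; rewrite polarZl // hw mulr0.
  by rewrite (proj1 Hq) hr mulVf.
pose a (i : 'I_n) v := polar q v (l i) / 2.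
have alin i : linear_form (a i).
  by move=> x u v; rewrite /a polar_lin // mulrDl mulrA.
pose P v := v - \sum_(i < n) a i v *: l i.
have hP v j : polar q (P v) (l j) = 0.
  rewrite polarBl // polar_suml //.
  under eq_bigr => i _ do rewrite Hl.
  rewrite (bigD1 j) //= eqxx big1 ?addr0; last by move=> i /negbTE ->; rewrite mul0r mulr0.
  by rewrite mul1r /a divfK // subrr.
apply: (Hnd n); exists a, a; split; first by [].
split; first by [].
move=> v.
have -> : q v = q (P v + \sum_(i < n) a i v *: l i) by rewrite /P subrK.
rewrite qD // Hz // polar_sumr // [X in _ + X]big1 ?addr0 ?add0r; last by move=> i _; rewrite hP mulr0.
apply: (mulfI h2); rewrite q_sum2 // mulr_sumr; apply: eq_bigr => i _.
under eq_bigr => j _ do rewrite Hl.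
rewrite (bigD1 i) //= eqxx big1 ?addr0; last by move=> j /negbTE; rewrite eq_sym => ->; rewrite mul0r mulr0.
by rewrite mul1r [2 * _]mulrC mulrA.
Qed.



Lemma ortho_seq (k : closedFieldType) (W : lmodType k) (q : W -> k) :
  (2:k) != 0 -> is_quadratic q -> Defs.nondegenerate q ->
  exists w : nat -> W, forall a b, polar q (w a) (w b) = (a == b)%:R * 2.
Proof.
move=> h2 Hq Hnd.
pose orthoL (L : seq W) := forall i j, (i < size L)%N -> (j < size L)%N ->
   polar q (nth 0 L i) (nth 0 L j) = (i == j)%:R * 2.
have Hex (L : seq W) : exists w, orthoL L ->
    (forall j, (j < size L)%N -> polar q w (nth 0 L j) = 0) /\ q w = 1.
  case: (classic (orthoL L)) => [H|H]; last by exists 0.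
  have [w [h1 h3]] := @ortho_ext k W q h2 Hq Hnd (size L) (fun i => nth 0 L i)
     (fun i j => H i j (ltn_ord i) (ltn_ord j)).
  by exists w => _; split => // j hj; exact: (h1 (Ordinal hj)).
pose next L := proj1_sig (constructive_indefinite_description _ (Hex L)).
have Hnext L : orthoL L ->
    (forall j, (j < size L)%N -> polar q (next L) (nth 0 L j) = 0) /\ q (next L) = 1 :=
  proj2_sig (constructive_indefinite_description _ (Hex L)).
pose build n := iter n (fun L => rcons L (next L)) [::].
have bS n : build n.+1 = rcons (build n) (next (build n)) by [].
have bsize n : size (build n) = n.
  by elim: n => // n IH; rewrite bS size_rcons IH.
have bortho n : orthoL (build n).
  elim: n => [|n IH]; first by move=> i j; rewrite bsize.
  have [Hn1 Hn3] := Hnext _ IH.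
  move=> i j; rewrite bS size_rcons !nth_rcons !bsize => hi hj.
  case: (ltngtP i n) => hin; case: (ltngtP j n) => hjn; try lia.
  - by apply: IH; rewrite bsize.
  - rewrite polarC // Hn1 ?bsize // hjn; have -> : (i == n) = false by lia.
    by rewrite mul0r.
  - rewrite Hn1 ?bsize // hin; have -> : (n == j) = false by lia.
    by rewrite mul0r.
  - by rewrite hin hjn polarxx // Hn3 eqxx mul1r mulr1.
pose w m := next (build m).
have hnth n m : (m < n)%N -> nth 0 (build n) m = w m.
  elim: n => // n IH hm; rewrite bS nth_rcons bsize.
  case: (ltngtP m n) => hmn; try lia; first by apply: IH.
  by rewrite hmn.
exists w => a b.
have ha : (a < (maxn a b).+1)%N by lia.
have hb : (b < (maxn a b).+1)%N by lia.
rewrite -(hnth _ _ ha) -(hnth _ _ hb); apply: bortho; rewrite bsize //.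
Qed.



Lemma sum_delta (k : fieldType) (r a : nat) (c : nat -> k) :
  \sum_(m < r) c m * (a == m)%:R = if (a < r)%N then c a else 0.
Proof.
case: ltnP => h.
  rewrite (bigD1 (Ordinal h)) //= eqxx mulr1 big1 ?addr0 // => m hm.
  rewrite (_ : (a == m) = false) ?mulr0 //; apply/negbTE; apply: contra hm => /eqP e.
  by apply/eqP; apply: val_inj; rewrite /= e.
apply: big1 => m _; rewrite (_ : (a == m) = false) ?mulr0 //.
have := ltn_ord m; lia.
Qed.

Lemma polar4 (k : fieldType) (W : lmodType k) (q : W -> k) (Hq : is_quadratic q)
  a b c d (x y z t : W) :
  polar q (a *: x + b *: y) (c *: z + d *: t) =
  a * c * polar q x z + a * d * polar q x t + b * c * polar q y z + b * d * polar q y t.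
Proof.
by rewrite !polarDl // !polarDr // !polarZl // !polarZr //; ring.
Qed.

Lemma embed_nd (k : closedFieldType) (V W : lmodType k) (q : V -> k) (q' : W -> k) :
  (2:k) != 0 -> ndc_quad_space q -> is_quadratic q' -> Defs.nondegenerate q' ->
  embeds q q'.
Proof.
move=> h2 [Hq [[I [e [Hsp Hli]]] _]] Hq' Hnd.
have [w Hw] := ortho_seq h2 Hq' Hnd.
have [ii hii] := sqrt_ex (-1 : k).
have h4 : (4 : k) != 0.
  by rewrite (_ : 4 = 2 * 2 :> k) ?mulf_neq0 //; rewrite -natrM.
pose c : k := 4^-1.
pose u m := 1 *: w (2 * m)%N + ii *: w (2 * m + 1)%N.
pose v m := c *: w (2 * m)%N + (- (c * ii)) *: w (2 * m + 1)%N.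
have e1 m n : (2 * m == 2 * n)%N = (m == n) by apply/eqP/eqP; lia.
have e2 m n : (2 * m == 2 * n + 1)%N = false by apply/eqP; lia.
have e3 m n : (2 * m + 1 == 2 * n)%N = false by apply/eqP; lia.
have e4 m n : (2 * m + 1 == 2 * n + 1)%N = (m == n) by apply/eqP/eqP; lia.
have hii' : ii * ii = -1 by rewrite -expr2.
have hUU m n : polar q' (u m) (u n) = 0.
  rewrite polar4 // !Hw e1 e2 e3 e4; move: ((m == n)%:R : k) => b.
  have -> : 1 * 1 * (b * 2) + 1 * ii * (0%:R * 2) + ii * 1 * (0%:R * 2) +
     ii * ii * (b * 2) = 2 * b * (ii * ii + 1) by ring.
  by rewrite hii' addNr mulr0.
have hVV m n : polar q' (v m) (v n) = 0.
  rewrite polar4 // !Hw e1 e2 e3 e4; move: ((m == n)%:R : k) => b.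
  have -> : c * c * (b * 2) + c * - (c * ii) * (0%:R * 2) + - (c * ii) * c * (0%:R * 2) +
     - (c * ii) * - (c * ii) * (b * 2) = 2 * b * c * c * (ii * ii + 1) by ring.
  by rewrite hii' addNr mulr0.
have hUV m n : polar q' (u m) (v n) = (m == n)%:R.
  rewrite polar4 // !Hw e1 e2 e3 e4; move: ((m == n)%:R : k) => b.
  apply/eqP; rewrite -subr_eq0; apply/eqP.
  have -> : 1 * c * (b * 2) + 1 * - (c * ii) * (0%:R * 2) + ii * c * (0%:R * 2) +
     ii * - (c * ii) * (b * 2) - b = - (2 * b * c) * (ii * ii + 1) by rewrite /c; field.
  by rewrite hii' addNr mulr0.
have hVU m n : polar q' (v m) (u n) = (m == n)%:R by rewrite polarC // hUV eq_sym.
clearbody u v.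
pose bb (i : I) (m : nat) := if @unpickle I m is Some j then polar q (e i) (e j) else 0.
pose S i := \sum_(m < pickle i) bb i m *: v m.
pose t i := u (pickle i) + S i + q (e i) *: v (pickle i).
have huS a r (cc : nat -> k) :
    polar q' (u a) (\sum_(m < r) cc m *: v m) = if (a < r)%N then cc a else 0.
  rewrite polar_sumr // -(sum_delta r a cc); apply: eq_bigr => m _; by rewrite hUV.
have hSu a r (cc : nat -> k) :
    polar q' (\sum_(m < r) cc m *: v m) (u a) = if (a < r)%N then cc a else 0.
  by rewrite polarC // huS.
have hvS a r (cc : nat -> k) : polar q' (v a) (\sum_(m < r) cc m *: v m) = 0.
  by rewrite polar_sumr // big1 // => m _; rewrite hVV mulr0.
have hSv a r (cc : nat -> k) : polar q' (\sum_(m < r) cc m *: v m) (v a) = 0.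
  by rewrite polarC // hvS.
have hSS r1 r2 (c1 c2 : nat -> k) :
    polar q' (\sum_(m < r1) c1 m *: v m) (\sum_(m < r2) c2 m *: v m) = 0.
  by rewrite polar_suml // big1 // => m _; rewrite hvS mulr0.
apply: (embed_basis (t := t) h2 Hq Hq' Hsp Hli) => i j.
rewrite /t /S !polarDl // !polarDr // !polarZl // !polarZr // !hUU !hUV !hVU !hVV.
rewrite !huS !hSu !hvS !hSv !hSS.
rewrite !mulr0 !addr0 !add0r.
case: (eqVneq i j) => [<-|hij].
  by rewrite ltnn eqxx !mulr1 add0r addr0 polarxx // mulr_natl mulr2n.
have hp : pickle i != pickle j by apply: contra hij => /eqP /(pcan_inj pickleK) ->.
case: (ltngtP (pickle i) (pickle j)) => hl; last by rewrite hl eqxx in hp.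
  by rewrite /bb pickleK !mulr0 !addr0 polarC.
by rewrite /bb pickleK !mulr0 !addr0 add0r.
Qed.



Section Poly.
Variable k : fieldType.
Hypothesis h2 : (2:k) != 0.

Definition q0 (p : {poly k}) : k := \sum_(i < size p) p`_i ^+ 2.

Lemma qE (p : {poly k}) n : (size p <= n)%N -> q0 p = \sum_(i < n) p`_i ^+ 2.
Proof.
move=> h; rewrite /q0 -(big_mkord xpredT (fun i => p`_i ^+ 2)) -(big_mkord xpredT (fun i => p`_i ^+ 2)) (big_cat_nat (leq0n _) h) /=.
rewrite [X in _ + X]big1_seq ?addr0 // => i /andP [_]; rewrite mem_index_iota.
by move=> /andP [hi _]; rewrite nth_default // expr0n.
Qed.

Lemma polE (x y : {poly k}) n : (size x <= n)%N -> (size y <= n)%N ->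
  polar q0 x y = \sum_(i < n) 2 * x`_i * y`_i.
Proof.
move=> hx hy.
have hxy : (size (x + y)%R <= n)%N.
  by apply: leq_trans (size_polyD _ _) _; rewrite geq_max hx hy.
rewrite /polar (qE hx) (qE hy) (qE hxy) -!sumrB; apply: eq_bigr => i _.
rewrite coefD; ring.
Qed.

Lemma q0_quad : is_quadratic q0.
Proof.
split.
  move=> a v; rewrite (qE (size_scale_leq a v)) /q0 mulr_sumr.
  by apply: eq_bigr => i _; rewrite coefZ exprMn.
move=> a u w v.
pose N := (size u + size w + size v)%N.
have hu : (size u <= N)%N by rewrite /N; lia.
have hw : (size w <= N)%N by rewrite /N; lia.
have hv : (size v <= N)%N by rewrite /N; lia.
have hau : (size (a *: u + w)%R <= N)%N.
  apply: leq_trans (size_polyD _ _) _; rewrite geq_max hw andbT.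
  exact: leq_trans (size_scale_leq _ _) hu.
rewrite (polE hau hv) (polE hu hv) (polE hw hv) mulr_sumr -big_split /=; apply: eq_bigr => i _.
rewrite coefD coefZ; ring.
Qed.

Lemma polXX a b : polar q0 'X^a 'X^b = 2 * (a == b)%:R.
Proof.
rewrite (polE _ _ (n := (maxn a b).+1)) ?size_polyXn; try lia.
under eq_bigr => l _ do rewrite !coefXn [(nat_of_ord l == b)]eq_sym.
rewrite (sum_delta _ _ (fun m => 2 * (m == a)%:R)); case: ltnP => h; last by lia.
by rewrite eq_sym.
Qed.

Lemma lf_sum (V : lmodType k) (f : V -> k) (I : Type) (r : seq I) c (y : I -> V) :
  linear_form f -> f (\sum_(j <- r) c j *: y j) = \sum_(j <- r) c j * f (y j).
Proof.
move=> lf; elim: r => [|a r IH].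
  rewrite !big_nil; have h := lf 1 0 0; rewrite scaler0 addr0 mul1r in h.
  by apply: (addIr (f 0)); rewrite add0r -h.
by rewrite !big_cons lf IH.
Qed.

Lemma q0_nd : Defs.nondegenerate q0.
Proof.
move=> s [g [h [hg [hh Hs]]]].
pose N := (s + s).+1.
pose A : 'M[k]_(N, s + s) := \matrix_(j, l)
   (match split l with inl i => g i 'X^j | inr i => h i 'X^j end).
pose K := kermx A.
have hK : K != 0.
  apply/eqP => hK0.
  have := mxrank_ker A; rewrite -/K hK0 mxrank0.
  have := rank_leq_col A; rewrite /N; lia.
have [r hr] : exists r, row r K != 0.
  case: (pickP (fun r => row r K != 0)) => [r hr | h0]; first by exists r.
  exfalso; move/eqP: hK; apply; apply/row_matrixP => r.
  by move: (h0 r) => /negbFE /eqP ->; rewrite row0.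
pose x := row r K.
have hxA : x *m A = 0 by rewrite /x -row_mul mulmx_ker row0.
have [j hj] : exists j, x 0 j != 0.
  case: (pickP (fun j => x 0 j != 0)) => [j hj | h0]; first by exists j.
  exfalso; move/eqP: hr; apply; apply/rowP => j.
  by move: (h0 j) => /negbFE /eqP ->; rewrite mxE.
pose u := \sum_(j < N) x 0 j *: ('X^j : {poly k}).
have hgu i : g i u = 0.
  rewrite /u lf_sum //.
  have := congr1 (fun M : 'M[k]_(1, s + s) => M 0 (@unsplit s s (inl i))) hxA; rewrite !mxE => H; rewrite -[RHS]H.
  by apply: eq_bigr => l _; congr (_ * _); rewrite /A mxE unsplitK.
have hhu i : h i u = 0.
  rewrite /u lf_sum //.
  have := congr1 (fun M : 'M[k]_(1, s + s) => M 0 (@unsplit s s (inr i))) hxA; rewrite !mxE => H; rewrite -[RHS]H.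
  by apply: eq_bigr => l _; congr (_ * _); rewrite /A mxE unsplitK.
have hpol : polar q0 u 'X^j = 0.
  have lin1 f : linear_form f -> f u = 0 -> f (u + 'X^j) = f 'X^j.
    by move=> lf hf; rewrite -[u]scale1r lf hf mulr0 add0r.
  have hqu : q0 u = 0 by rewrite Hs big1 // => i _; rewrite hgu mul0r.
  have hq : q0 (u + 'X^j) = q0 'X^j.
    by rewrite !Hs; apply: eq_bigr => i _; rewrite (lin1 _ (hg i) (hgu i)) (lin1 _ (hh i) (hhu i)).
  by rewrite /polar hq hqu subr0 subrr.
move: hpol; rewrite /u polar_suml; last exact: q0_quad.
under eq_bigr => l _ do rewrite polXX.
rewrite (bigD1 j) //= eqxx big1 ?addr0.
  by move/eqP; rewrite mulr1 mulf_eq0 (negbTE h2) (negbTE hj).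
move=> l /negbTE hl.
by rewrite (_ : (l == j :> nat) = false) // mulr0 mulr0.
Qed.

Lemma q0_ndc : ndc_quad_space q0.
Proof.
split; first exact: q0_quad.
split; last exact: q0_nd.
exists nat, (fun i => 'X^i : {poly k}); split.
  move=> p; exists (iota 0 (size p)), (fun i => p`_i).
  by rewrite -{1}[p]coefK poly_def -(big_mkord xpredT (fun i => p`_i *: 'X^i)) /index_iota subn0.
move=> s c us hs i hi.
have := congr1 (fun p : {poly k} => p`_i) hs; rewrite /= coef0 coef_sumMXn => <-.
rewrite -big_filter.
rewrite (eq_filter (a2 := pred1 i)) ?filter_pred1_uniq ?big_seq1 //.
Qed.

End Poly.


Theorem corollary2p5 (k : closedFieldType) (hk : (2%N \notin [pchar k])) :
  (exists (V : lmodType k) (q : V -> k), ndc_quad_space q) /\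
  (forall (V W : lmodType k) (q : V -> k) (q' : W -> k),
      ndc_quad_space q -> ndc_quad_space q' -> isogenous q q').
Proof.
have h2 : (2:k) != 0 by move: hk; rewrite inE.
split.
  by exists {poly k}, (@q0 k); apply: q0_ndc.
move=> V W q q' HV HW; split.
  exact: (embed_nd h2 HV HW.1 HW.2.2).
exact: (embed_nd h2 HW HV.1 HV.2.2).
Qed.
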